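(* Let $S$ be an $E$-unitary inverse semigroup, $A$ a semilattice of groups, and $\Lambda=(\alpha,\lambda,f)$, $\Lambda'=(\alpha',\lambda',f')$ Sieben twisted $S$-module structures on $A$. If $\Lambda$ is equivalent to $\Lambda'$, then the corresponding twisted partial actions $\Theta=\Theta^\Lambda$ and $\Theta'=\Theta^{\Lambda'}$ of $\mathcal G(S)$ on $A$ are equivalent.
   Context: A semilattice of groups is an inverse semigroup $A$ with central idempotents; $A_e=\{a: aa^{-1}=a^{-1}a=e\}$. $\mathcal G(S)=S/\sigma$, $\sigma$ the minimum group congruence; $E$-unitary: $e\le s$, $e\in E(S)$ imply $s\in E(S)$. A twisted $S$-module structure $(\alpha,\lambda,f)$: $\alpha:E(S)\to E(A)$ isomorphism, $\lambda_s$ relatively invertible endomorphisms of $A$ (there are $\bar\varphi$, $e_\varphi\in E(A)$ with $\bar\varphi\varphi(a)=e_\varphi a$, $\varphi\bar\varphi(a)=\varphi(e_\varphi)a$, $e_\varphi$ identity of $\bar\varphi(A)$, $\varphi(e_\varphi)$ identity of $\varphi(A)$), $f(s,t)\in A_{\alpha(stt^{-1}s^{-1})}$, with (i) $\lambda_e(a)=\alpha(e)a$; (ii) $\lambda_s(\alpha(e))=\alpha(ses^{-1})$; (iii) $\lambda_s\lambda_t(a)=f(s,t)\lambda_{st}(a)f(s,t)^{-1}$; (iv) $f(se,e)=\alpha(ses^{-1})$, $f(e,es)=\alpha(ess^{-1})$; (v) $\lambda_s(f(t,u))f(s,tu)=f(s,t)f(st,u)$; Sieben: also $f(s,e)=\alpha(ses^{-1})$,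 $f(e,s)=\alpha(ess^{-1})$. Equivalence of structures: $\alpha'=\alpha$ and there is $g:S\to A$, $g(s)\in A_{\alpha(ss^{-1})}$, with $\lambda'_s(a)=g(s)\lambda_s(a)g(s)^{-1}$ and $f'(s,t)g(st)=g(s)\lambda_s(g(t))f(s,t)$. $\Theta^\Lambda=(\theta,w)$: for $x\in\mathcal G(S)$, $D_x=\bigsqcup_{s\in x}A_{\alpha(ss^{-1})}$; $\theta_x(a)=\lambda_s(a)$ for $a\in D_{x^{-1}}$ with $s\in x$ the unique element with $\alpha(s^{-1}s)=aa^{-1}$; $w_{x,y}a=f(s,s^{-1}t)a$, $aw_{x,y}=af(s,s^{-1}t)$ for $a\in D_xD_{xy}$ with $s\in x$, $t\in xy$ unique such that $\alpha(ss^{-1})=\alpha(tt^{-1})=aa^{-1}$; this is a twisted partial action. Multipliers of a semigroup $T$: pairs $(L,R)$ of maps with $L(st)=L(s)t$, $R(st)=sR(t)$, $sL(t)=R(s)t$, written $ws$, $sw$; monoid $\mathcal M(T)$ with unit group $\mathcal U(\mathcal M(T))$. Two twisted partial actions $(\theta,w)$, $(\theta',w')$ of a group on $A$ (with domains $D_x$, $D'_x$) are equivalent if $D'_x=D_x$ and there exist $\varepsilon_x\in\mathcal U(\mathcal M(D_x))$ with $\theta'_x(s)=\varepsilon_x\theta_x(s)\varepsilon_x^{-1}$ for $s\in D_{x^{-1}}$ and $\theta'_x(s)w'_{x,y}\varepsilon_{xy}=\varepsilon_x\theta_x(s\varepsilon_y)w_{x,y}$ for $s\in D_{x^{-1}}D_y$.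 *)

(* Defs.v *)
Record InvSemigroup := {
  isg_car :> Type;
  isg_mul : isg_car -> isg_car -> isg_car;
  isg_inv : isg_car -> isg_car;
  isg_assoc : forall a b c, isg_mul a (isg_mul b c) = isg_mul (isg_mul a b) c;
  isg_regular : forall a, isg_mul (isg_mul a (isg_inv a)) a = a;
  isg_regular' : forall a, isg_mul (isg_mul (isg_inv a) a) (isg_inv a) = isg_inv a;
  isg_idem_comm : forall e f, isg_mul e e = e -> isg_mul f f = f ->
                  isg_mul e f = isg_mul f e }.

Arguments isg_mul {_} _ _.
Arguments isg_inv {_} _.

Declare Scope isg_scope.
Infix "**" := isg_mul (at level 40, left associativity) : isg_scope.
Notation "x ^-1" := (isg_inv x) (at level 3, left associativity, format "x ^-1") : isg_scope.
Open Scope isg_scope.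

Section InvSemigroupDefs.
Context {S : InvSemigroup}.

Definition is_idem (e : S) : Prop := e ** e = e.

Definition nat_le (a b : S) : Prop := exists e, is_idem e /\ a = e ** b.

Definition in_Ae (e a : S) : Prop := a ** a^-1 = e /\ a^-1 ** a = e.

Definition is_endo (phi : S -> S) : Prop := forall a b, phi (a ** b) = phi a ** phi b.

Definition identity_of (P : S -> Prop) (e : S) : Prop :=
  P e /\ forall b, P b -> e ** b = b /\ b ** e = b.

Definition rel_invertible (phi : S -> S) : Prop :=
  exists (phibar : S -> S) (ephi : S),
    is_endo phibar /\ is_idem ephi /\
    (forall a, phibar (phi a) = ephi ** a) /\
    (forall a, phi (phibar a) = phi ephi ** a) /\
    identity_of (fun b => exists a, b = phibar a) ephi /\
    identity_of (fun b => exists a, b = phi a) (phi ephi).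

Definition congruence (rho : S -> S -> Prop) : Prop :=
  (forall s, rho s s) /\ (forall s t, rho s t -> rho t s) /\
  (forall s t u, rho s t -> rho t u -> rho s u) /\
  (forall s t u, rho s t -> rho (u ** s) (u ** t) /\ rho (s ** u) (t ** u)).

Definition group_congruence (rho : S -> S -> Prop) : Prop :=
  congruence rho /\
  exists u, (forall s, rho (u ** s) s /\ rho (s ** u) s) /\
            (forall s, exists t, rho (s ** t) u /\ rho (t ** s) u).

Definition sigma (s t : S) : Prop :=
  forall rho, group_congruence rho -> rho s t.

End InvSemigroupDefs.

Definition E_unitary (S : InvSemigroup) : Prop :=
  forall e s : S, is_idem e -> nat_le e s -> is_idem s.

Definition semilattice_of_groups (A : InvSemigroup) : Prop :=
  forall e a : A, is_idem e -> e ** a = a ** e.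

Record Group := {
  grp_car :> Type;
  gmul : grp_car -> grp_car -> grp_car;
  ginv : grp_car -> grp_car;
  gone : grp_car;
  gassoc : forall x y z, gmul x (gmul y z) = gmul (gmul x y) z;
  gone_l : forall x, gmul gone x = x;
  ginv_l : forall x, gmul (ginv x) x = gone }.

Arguments gmul {_} _ _.
Arguments ginv {_} _.
Arguments gone {_}.

(** (G, q) presents G(S) = S/sigma: q is a surjective homomorphism whose
    kernel relation is exactly the minimum group congruence sigma. *)
Definition max_group_image (S : InvSemigroup) (G : Group) (q : S -> G) : Prop :=
  (forall s t, q (s ** t) = gmul (q s) (q t)) /\
  (forall x, exists s, q s = x) /\
  (forall s t, q s = q t <-> sigma s t).

Section TwistedModules.
Context {S A : InvSemigroup}.

(** alpha : E(S) -> E(A) is an isomorphism (alpha is a map S -> A, only its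
    restriction to E(S) matters). *)
Definition iso_E (alpha : S -> A) : Prop :=
  (forall e, is_idem e -> is_idem (alpha e)) /\
  (forall e f, is_idem e -> is_idem f -> alpha (e ** f) = alpha e ** alpha f) /\
  (forall e f, is_idem e -> is_idem f -> alpha e = alpha f -> e = f) /\
  (forall g, is_idem g -> exists e, is_idem e /\ alpha e = g).

Definition sieben_twisted_module (alpha : S -> A) (lam : S -> A -> A)
    (f : S -> S -> A) : Prop :=
  iso_E alpha /\
  (forall s, is_endo (lam s) /\ rel_invertible (lam s)) /\
  (forall s t, in_Ae (alpha (s ** t ** t^-1 ** s^-1)) (f s t)) /\
  (forall e a, is_idem e -> lam e a = alpha e ** a) /\
  (forall s e, is_idem e -> lam s (alpha e) = alpha (s ** e ** s^-1)) /\
  (forall s t a, lam s (lam t a) = f s t ** lam (s ** t) a ** (f s t)^-1) /\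
  (forall s e, is_idem e -> f (s ** e) e = alpha (s ** e ** s^-1)) /\
  (forall s e, is_idem e -> f e (e ** s) = alpha (e ** s ** s^-1)) /\
  (forall s t u, lam s (f t u) ** f s (t ** u) = f s t ** f (s ** t) u) /\
  (* Sieben's extra conditions *)
  (forall s e, is_idem e -> f s e = alpha (s ** e ** s^-1)) /\
  (forall s e, is_idem e -> f e s = alpha (e ** s ** s^-1)).

Definition equiv_twisted_modules (alpha : S -> A) (lam : S -> A -> A)
    (f : S -> S -> A) (alpha' : S -> A) (lam' : S -> A -> A)
    (f' : S -> S -> A) : Prop :=
  (forall e, is_idem e -> alpha' e = alpha e) /\
  exists g : S -> A,
    (forall s, in_Ae (alpha (s ** s^-1)) (g s)) /\
    (forall s a, lam' s a = g s ** lam s a ** (g s)^-1) /\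
    (forall s t, f' s t ** g (s ** t) = g s ** lam s (g t) ** f s t).

Definition Ddom {G : Group} (alpha : S -> A) (q : S -> G) (x : G) (a : A) : Prop :=
  exists s, q s = x /\ in_Ae (alpha (s ** s^-1)) a.

Definition prod_dom {G : Group} (D : G -> A -> Prop) (x y : G) (a : A) : Prop :=
  exists b c, D x b /\ D y c /\ a = b ** c.

(** (theta, w) is the twisted partial action Theta^Lambda of G(S) on A;
    the multiplier w_{x,y} is given by its left/right actions wL x y, wR x y. *)
Definition Theta_of {G : Group} (alpha : S -> A) (lam : S -> A -> A)
    (f : S -> S -> A) (q : S -> G) (theta : G -> A -> A)
    (wL wR : G -> G -> A -> A) : Prop :=
  (forall x a s, Ddom alpha q (ginv x) a -> q s = x ->
     alpha (s^-1 ** s) = a ** a^-1 -> theta x a = lam s a) /\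
  (forall x y a s t, prod_dom (Ddom alpha q) x (gmul x y) a ->
     q s = x -> q t = gmul x y ->
     alpha (s ** s^-1) = a ** a^-1 -> alpha (t ** t^-1) = a ** a^-1 ->
     wL x y a = f s (s^-1 ** t) ** a /\ wR x y a = a ** f s (s^-1 ** t)).

Definition is_multiplier (T : A -> Prop) (L R : A -> A) : Prop :=
  (forall a, T a -> T (L a) /\ T (R a)) /\
  (forall a b, T a -> T b ->
     L (a ** b) = L a ** b /\ R (a ** b) = a ** R b /\ a ** L b = R a ** b).

(** equivalence of twisted partial actions; the unit multiplier eps_x of
    M(D_x) is (eL x, eR x), with inverse (eLi x, eRi x). *)
Definition equiv_TPA {G : Group} (D D' : G -> A -> Prop)
    (theta : G -> A -> A) (wL wR : G -> G -> A -> A)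
    (theta' : G -> A -> A) (wL' wR' : G -> G -> A -> A) : Prop :=
  (forall x a, D' x a <-> D x a) /\
  exists eL eR eLi eRi : G -> A -> A,
    (forall x, is_multiplier (D x) (eL x) (eR x) /\
               is_multiplier (D x) (eLi x) (eRi x) /\
               (forall a, D x a ->
                  eL x (eLi x a) = a /\ eLi x (eL x a) = a /\
                  eR x (eRi x a) = a /\ eRi x (eR x a) = a)) /\
    (forall x a, D (ginv x) a -> theta' x a = eL x (eRi x (theta x a))) /\
    (forall x y a, prod_dom D (ginv x) y a ->
       eR (gmul x y) (wR' x y (theta' x a)) =
       eL x (wR x y (theta x (eR y a)))).

End TwistedModules.

(* Main.v *)
From Stdlib Require Import Setoid ClassicalEpsilon.
Require Import Defs.
Ltac assoc := repeat rewrite isg_assoc; reflexivity.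

Section ISG.
Context {T : InvSemigroup}.
Implicit Types a b c e f : T.

Lemma idem_comm e f : is_idem e -> is_idem f -> e ** f = f ** e.
Proof. apply isg_idem_comm. Qed.

Lemma inv_unique a b : a ** b ** a = a -> b ** a ** b = b -> b = a^-1.
Proof.
  intros H1 H2.
  assert (Iba : is_idem (b ** a)).
  { unfold is_idem. replace (b ** a ** (b ** a)) with (b ** a ** b ** a) by assoc. now rewrite H2. }
  assert (Ica : is_idem (a^-1 ** a)).
  { unfold is_idem. replace (a^-1 ** a ** (a^-1 ** a)) with (a^-1 ** a ** a^-1 ** a) by assoc. now rewrite isg_regular'. }
  assert (Iab : is_idem (a ** b)).
  { unfold is_idem. replace (a ** b ** (a ** b)) with (a ** b ** a ** b) by assoc. now rewrite H1. }
  assert (Iac : is_idem (a ** a^-1)).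
  { unfold is_idem. replace (a ** a^-1 ** (a ** a^-1)) with (a ** a^-1 ** a ** a^-1) by assoc. now rewrite isg_regular. }
  transitivity (a^-1 ** a ** b).
  - transitivity ((b ** a) ** (a^-1 ** a) ** b).
    + replace ((b ** a) ** (a^-1 ** a) ** b) with (b ** (a ** a^-1 ** a) ** b) by assoc.
      rewrite isg_regular. symmetry; exact H2.
    + rewrite (idem_comm _ _ Iba Ica).
      replace (a^-1 ** a ** (b ** a) ** b) with (a^-1 ** a ** (b ** a ** b)) by assoc.
      now rewrite H2.
  - transitivity (a^-1 ** ((a ** b) ** (a ** a^-1))).
    + rewrite (idem_comm _ _ Iab Iac).
      replace (a^-1 ** ((a ** a^-1) ** (a ** b))) with (a^-1 ** a ** a^-1 ** a ** b) by assoc.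
      now rewrite isg_regular'.
    + replace (a^-1 ** ((a ** b) ** (a ** a^-1))) with (a^-1 ** (a ** b ** a) ** a^-1) by assoc.
      rewrite H1. apply isg_regular'.
Qed.

Lemma inv_inv a : (a^-1)^-1 = a.
Proof. symmetry. apply inv_unique. apply isg_regular'. apply isg_regular. Qed.

Lemma idem_l a : is_idem (a ** a^-1).
Proof. unfold is_idem. replace (a ** a^-1 ** (a ** a^-1)) with (a ** a^-1 ** a ** a^-1) by assoc. now rewrite isg_regular. Qed.

Lemma idem_r a : is_idem (a^-1 ** a).
Proof. unfold is_idem. replace (a^-1 ** a ** (a^-1 ** a)) with (a^-1 ** a ** a^-1 ** a) by assoc. now rewrite isg_regular'. Qed.

Lemma idem_mul e f : is_idem e -> is_idem f -> is_idem (e ** f).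
Proof. intros He Hf. unfold is_idem.
  replace (e ** f ** (e ** f)) with (e ** (f ** e) ** f) by assoc.
  rewrite <- (idem_comm _ _ He Hf).
  replace (e ** (e ** f) ** f) with ((e ** e) ** (f ** f)) by assoc.
  now rewrite He, Hf. Qed.

Lemma idem_inv e : is_idem e -> e^-1 = e.
Proof. intros He. symmetry. apply inv_unique; unfold is_idem in He; now rewrite !He. Qed.

Lemma inv_mul a b : (a ** b)^-1 = b^-1 ** a^-1.
Proof.
  symmetry. apply inv_unique.
  - replace (a ** b ** (b^-1 ** a^-1) ** (a ** b)) with (a ** ((b ** b^-1) ** (a^-1 ** a)) ** b) by assoc.
    rewrite (idem_comm _ _ (idem_l b) (idem_r a)).
    replace (a ** (a^-1 ** a ** (b ** b^-1)) ** b) with ((a ** a^-1 ** a) ** (b ** b^-1 ** b)) by assoc.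
    now rewrite !isg_regular.
  - replace (b^-1 ** a^-1 ** (a ** b) ** (b^-1 ** a^-1)) with (b^-1 ** ((a^-1 ** a) ** (b ** b^-1)) ** a^-1) by assoc.
    rewrite (idem_comm _ _ (idem_r a) (idem_l b)).
    replace (b^-1 ** (b ** b^-1 ** (a^-1 ** a)) ** a^-1) with ((b^-1 ** b ** b^-1) ** (a^-1 ** a ** a^-1)) by assoc.
    now rewrite !isg_regular'.
Qed.

Lemma endo_inv (phi : T -> T) a : is_endo phi -> phi (a^-1) = (phi a)^-1.
Proof. intros H. apply inv_unique; rewrite <- !H. now rewrite isg_regular. now rewrite isg_regular'. Qed.

Lemma idem_conj s e : is_idem e -> is_idem (s ** e ** s^-1).
Proof. intros He. unfold is_idem.
  replace (s ** e ** s^-1 ** (s ** e ** s^-1)) with (s ** (e ** (s^-1 ** s)) ** e ** s^-1) by assoc.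
  rewrite (idem_comm _ _ He (idem_r s)).
  replace (s ** (s^-1 ** s ** e) ** e ** s^-1) with ((s ** s^-1 ** s) ** (e ** e) ** s^-1) by assoc.
  now rewrite isg_regular, He. Qed.

End ISG.

Section SLG.
Context {A : InvSemigroup} (HA : semilattice_of_groups A).
Implicit Types a b c e f E F : A.

Lemma inAe_idem E a : in_Ae E a -> is_idem E.
Proof. intros [H1 H2]. rewrite <- H1. apply idem_l. Qed.

Lemma inAe_l E a : in_Ae E a -> E ** a = a.
Proof. intros [H1 H2]. rewrite <- H1. apply isg_regular. Qed.

Lemma inAe_r E a : in_Ae E a -> a ** E = a.
Proof. intros [H1 H2]. rewrite <- H2, isg_assoc. apply isg_regular. Qed.

Lemma inAe_inv E a : in_Ae E a -> in_Ae E a^-1.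
Proof. intros [H1 H2]. split; rewrite inv_inv; auto. Qed.

Lemma inAe_E E : is_idem E -> in_Ae E E.
Proof. intros H. unfold in_Ae. rewrite idem_inv by exact H. auto. Qed.

Lemma inAe_mul E F a b : in_Ae E a -> in_Ae F b -> in_Ae (E ** F) (a ** b).
Proof.
  intros Ha Hb. pose proof Ha as [Ha1 Ha2]. pose proof Hb as [Hb1 Hb2].
  assert (IE := inAe_idem _ _ Ha). assert (IF := inAe_idem _ _ Hb).
  unfold in_Ae. rewrite inv_mul. split.
  - replace (a ** b ** (b^-1 ** a^-1)) with (a ** (b ** b^-1) ** a^-1) by assoc.
    rewrite Hb1, <- (HA _ _ IF).
    replace (F ** a ** a^-1) with (F ** (a ** a^-1)) by assoc.
    rewrite Ha1. apply idem_comm; auto.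
  - replace (b^-1 ** a^-1 ** (a ** b)) with (b^-1 ** (a^-1 ** a) ** b) by assoc.
    rewrite Ha2.
    replace (b^-1 ** E ** b) with (E ** (b^-1 ** b)) by (rewrite <- (HA _ (b^-1) IE); assoc).
    now rewrite Hb2.
Qed.

Lemma inAe_same E a b : in_Ae E a -> in_Ae E b -> in_Ae E (a ** b).
Proof. intros Ha Hb. pose proof (inAe_mul _ _ _ _ Ha Hb) as H.
  now rewrite (inAe_idem _ _ Ha) in H. Qed.

End SLG.

Arguments gone_l {_} _. Arguments ginv_l {_} _. Arguments gassoc {_} _ _ _.
Section Grp.
Context {G : Group}.
Lemma gidem (y : G) : gmul y y = y -> y = gone.
Proof. intros H. rewrite <- (gone_l y) at 1. rewrite <- (ginv_l y), <- gassoc, H. reflexivity. Qed.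
Lemma ginv_r (x : G) : gmul x (ginv x) = gone.
Proof. apply gidem. rewrite <- gassoc, (gassoc (ginv x)), ginv_l, gone_l. reflexivity. Qed.
Lemma gone_r (x : G) : gmul x gone = x.
Proof. rewrite <- (ginv_l x), gassoc, ginv_r. apply gone_l. Qed.
Lemma ginv_uniq (x y : G) : gmul x y = gone -> y = ginv x.
Proof. intros H. rewrite <- (gone_l y), <- (ginv_l x), <- gassoc, H. apply gone_r. Qed.
Lemma ginv_inv (x : G) : ginv (ginv x) = x.
Proof. symmetry. apply ginv_uniq. apply ginv_l. Qed.
End Grp.

Section Sg.
Context {S : InvSemigroup}.
Implicit Types s t u w e f : S.

Definition rho s t := exists e, is_idem e /\ e ** s = e ** t.

Lemma idem_absorb e f : is_idem e -> is_idem f -> e ** f ** e = e ** f /\ e ** f ** f = e ** f.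
Proof. intros He Hf. split.
  - replace (e ** f ** e) with (e ** (f ** e)) by assoc. rewrite <- (idem_comm _ _ He Hf).
    rewrite isg_assoc. now rewrite He.
  - replace (e ** f ** f) with (e ** (f ** f)) by assoc. now rewrite Hf. Qed.

Lemma rho_gc s0 : group_congruence rho.
Proof.
  split; [split; [|split; [|split]]|].
  - intros s. exists (s ** s^-1). split; auto using idem_l.
  - intros s t [e [He H]]. exists e. auto.
  - intros s t u [e [He H1]] [f [Hf H2]]. exists (f ** e). split. apply idem_mul; auto.
    replace (f ** e ** s) with (f ** (e ** s)) by assoc. rewrite H1.
    rewrite isg_assoc, (idem_comm _ _ Hf He), <- isg_assoc, H2, isg_assoc, (idem_comm _ _ He Hf).
    assoc.
  - intros s t u [e [He H]]. split.
    + exists (u ** e ** u^-1). split. apply idem_conj; auto.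
      assert (K : forall v, u ** e ** u^-1 ** (u ** v) = u ** (e ** v)).
      { intros v. replace (u ** e ** u^-1 ** (u ** v)) with (u ** (e ** (u^-1 ** u)) ** v) by assoc.
        rewrite (idem_comm _ _ He (idem_r u)).
        replace (u ** (u^-1 ** u ** e) ** v) with ((u ** u^-1 ** u) ** e ** v) by assoc.
        rewrite isg_regular. assoc. }
      now rewrite !K, H.
    + exists e. split; auto. rewrite !isg_assoc, H. reflexivity.
  - exists (s0 ** s0^-1). split.
    + intros w. split.
      * exists (s0 ** s0^-1). split. apply idem_l. rewrite isg_assoc, (idem_l s0). reflexivity.
      * exists (w ** (s0 ** s0^-1) ** w^-1). split. apply idem_conj, idem_l.
        assert (K : w ** (s0 ** s0^-1) ** w^-1 ** w = w ** (s0 ** s0^-1)).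
        { replace (w ** (s0 ** s0^-1) ** w^-1 ** w) with (w ** ((s0 ** s0^-1) ** (w^-1 ** w))) by assoc.
          rewrite (idem_comm _ _ (idem_l s0) (idem_r w)). rewrite !isg_assoc, isg_regular. reflexivity. }
        rewrite K, isg_assoc, K, <- isg_assoc, (idem_l s0). reflexivity.
    + intros w. exists (w^-1). split.
      * exists (w ** w^-1 ** (s0 ** s0^-1)). split. apply idem_mul; apply idem_l.
        destruct (idem_absorb _ _ (idem_l w) (idem_l s0)) as [K1 K2].
        rewrite K1. rewrite K2. reflexivity.
      * exists (w^-1 ** w ** (s0 ** s0^-1)). split. apply idem_mul. apply idem_r. apply idem_l.
        destruct (idem_absorb _ _ (idem_r w) (idem_l s0)) as [K1 K2].
        rewrite K1. rewrite K2. reflexivity.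
Qed.

Lemma sigma_rho s t : sigma s t -> rho s t.
Proof. intros H. apply H. apply (rho_gc s). Qed.

Lemma eu_idem (HE : E_unitary S) e s s' : is_idem e -> e ** s = e ** s' -> is_idem (s^-1 ** s').
Proof.
  intros He H. apply (HE (s^-1 ** e ** s)).
  - pose proof (idem_conj (s^-1) e He) as K. rewrite inv_inv in K. exact K.
  - exists (s^-1 ** e ** s). split.
    + pose proof (idem_conj (s^-1) e He) as K. rewrite inv_inv in K. exact K.
    + replace (s^-1 ** e ** s ** (s^-1 ** s')) with (s^-1 ** (e ** (s ** s^-1)) ** s') by assoc.
      rewrite (idem_comm _ _ He (idem_l s)).
      replace (s^-1 ** (s ** s^-1 ** e) ** s') with ((s^-1 ** s ** s^-1) ** (e ** s')) by assoc.
      rewrite isg_regular', <- H. assoc.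
Qed.

Lemma aux s f f' : is_idem f -> is_idem f' -> s ** f ** f' = s -> s ** f = s.
Proof. intros Hf Hf' H. rewrite <- H at 1. rewrite <- isg_assoc, (idem_comm _ _ Hf' Hf), isg_assoc.
  rewrite <- (isg_assoc _ s f f), Hf. exact H. Qed.

Lemma eu_uniq (HE : E_unitary S) s s' : rho s s' -> s ** s^-1 = s' ** s'^-1 -> s = s'.
Proof.
  intros [e [He H]] Hss.
  assert (If := eu_idem HE e s s' He H).
  assert (If' := eu_idem HE e s' s He (eq_sym H)).
  assert (Hsf : s ** (s^-1 ** s') = s').
  { rewrite isg_assoc, Hss. apply isg_regular. }
  assert (Hsf' : s' ** (s'^-1 ** s) = s).
  { rewrite isg_assoc, <- Hss. apply isg_regular. }
  assert (H3 : s ** (s^-1 ** s') ** (s'^-1 ** s) = s) by (rewrite Hsf, Hsf'; reflexivity).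
  rewrite <- Hsf. symmetry. apply aux with (f' := s'^-1 ** s); auto.
Qed.

Context {G : Group} (q : S -> G) (Hq : max_group_image S G q).

Lemma q_idem e : is_idem e -> q e = gone.
Proof. intros He. apply gidem. destruct Hq as [H _]. rewrite <- H. now rewrite He. Qed.

Lemma q_inv s : q (s^-1) = ginv (q s).
Proof. apply ginv_uniq. destruct Hq as [H _]. rewrite <- H. apply q_idem, idem_l. Qed.

Lemma q_mul s t : q (s ** t) = gmul (q s) (q t).
Proof. destruct Hq as [H _]. apply H. Qed.

Lemma q_uniq (HE : E_unitary S) s s' : q s = q s' -> s ** s^-1 = s' ** s'^-1 -> s = s'.
Proof. intros H1 H2. apply eu_uniq; auto. apply sigma_rho. destruct Hq as [_ [_ H]]. now apply H. Qed.

End Sg.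

Section Main.
Context {S A : InvSemigroup} {G : Group} (q : S -> G) (alpha : S -> A).
Context (HE : E_unitary S) (HA : semilattice_of_groups A) (Hq : max_group_image S G q)
        (Hiso : iso_E alpha).

Definition P x b s := q s = x /\ in_Ae (alpha (s ** s^-1)) b.

Lemma cent_move (E a b : A) : is_idem E -> a ** E ** b = a ** b ** E.
Proof. intros H. rewrite <- isg_assoc, (HA _ _ H). assoc. Qed.

Lemma alpha_idem (e : S) : is_idem e -> is_idem (alpha e).
Proof. destruct Hiso as [H _]. apply H. Qed.

Lemma alpha_mul (e f : S) : is_idem e -> is_idem f -> alpha (e ** f) = alpha e ** alpha f.
Proof. destruct Hiso as [_ [H _]]. apply H. Qed.

Lemma canon x b s s' : P x b s -> P x b s' -> s = s'.
Proof.
  intros [H1 [H2 _]] [H1' [H2' _]].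
  apply (q_uniq q Hq HE). congruence.
  destruct Hiso as [_ [_ [Hinj _]]]. apply Hinj; try apply idem_l. congruence.
Qed.

Definition mulL (h : S -> A) x b : A :=
  match excluded_middle_informative (exists s, P x b s) with
  | left H => h (proj1_sig (constructive_indefinite_description _ H)) ** b
  | right _ => b end.
Definition mulR (h : S -> A) x b : A :=
  match excluded_middle_informative (exists s, P x b s) with
  | left H => b ** h (proj1_sig (constructive_indefinite_description _ H))
  | right _ => b end.

Lemma mulL_eq h x b s : P x b s -> mulL h x b = h s ** b.
Proof. intros Hs. unfold mulL. destruct excluded_middle_informative as [H|H].
  - destruct constructive_indefinite_description as [s' Hs']. simpl.
    rewrite (canon _ _ _ _ Hs' Hs). reflexivity.
  - exfalso. apply H. eauto. Qed.

Lemma mulR_eq h x b s : P x b s -> mulR h x b = b ** h s.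
Proof. intros Hs. unfold mulR. destruct excluded_middle_informative as [H|H].
  - destruct constructive_indefinite_description as [s' Hs']. simpl.
    rewrite (canon _ _ _ _ Hs' Hs). reflexivity.
  - exfalso. apply H. eauto. Qed.

Definition Goodh (h : S -> A) :=
  (forall s, in_Ae (alpha (s ** s^-1)) (h s)) /\
  (forall e s, is_idem e -> h (e ** s) = alpha e ** h s).

Lemma P_prod x a b sa sb : P x a sa -> P x b sb ->
  P x (a ** b) ((sb ** sb^-1) ** sa) /\ P x (a ** b) ((sa ** sa^-1) ** sb).
Proof.
  intros [Ha1 Ha2] [Hb1 Hb2].
  assert (Hab := inAe_mul HA _ _ _ _ Ha2 Hb2).
  assert (K : forall s1 s2 : S, (s2 ** s2^-1 ** s1) ** (s2 ** s2^-1 ** s1)^-1 = s2 ** s2^-1 ** (s1 ** s1^-1)).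
  { intros s1 s2. rewrite inv_mul, (idem_inv _ (idem_l s2)).
    replace (s2 ** s2^-1 ** s1 ** (s1^-1 ** (s2 ** s2^-1))) with (s2 ** s2^-1 ** (s1 ** s1^-1) ** (s2 ** s2^-1)) by assoc.
    apply idem_absorb; apply idem_l. }
  split; split.
  - rewrite q_mul, q_idem, gone_l; auto. apply idem_l.
  - rewrite K, alpha_mul by apply idem_l.
    rewrite (HA _ _ (alpha_idem _ (idem_l _))). exact Hab.
  - rewrite q_mul, q_idem, gone_l; auto. apply idem_l.
  - rewrite K, alpha_mul by apply idem_l. exact Hab.
Qed.

Lemma mult_h h (Hh : Goodh h) x : is_multiplier (Ddom alpha q x) (mulL h x) (mulR h x).
Proof.
  destruct Hh as [Hh1 Hh2].
  split.
  - intros a [s Hs]. rewrite (mulL_eq _ _ _ _ Hs), (mulR_eq _ _ _ _ Hs).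
    destruct Hs as [Hs1 Hs2]. split; exists s; split; auto.
    + apply inAe_same; auto.
    + apply inAe_same; auto.
  - intros a b [sa Ha] [sb Hb].
    destruct (P_prod _ _ _ _ _ Ha Hb) as [H1 H2].
    assert (Eq := canon _ _ _ _ H1 H2).
    rewrite (mulL_eq _ _ _ _ H1), (mulR_eq _ _ _ _ H2), (mulL_eq _ _ _ _ Ha), (mulL_eq _ _ _ _ Hb),
      (mulR_eq _ _ _ _ Ha), (mulR_eq _ _ _ _ Hb).
    destruct Ha as [_ Ha]. destruct Hb as [_ Hb].
    assert (Ia := alpha_idem _ (idem_l sa)). assert (Ib := alpha_idem _ (idem_l sb)).
    rewrite !Hh2 by apply idem_l.
    split; [|split].
    + rewrite (HA _ _ Ib).
      replace (h sa ** alpha (sb ** sb^-1) ** (a ** b)) with (h sa ** (alpha (sb ** sb^-1) ** a) ** b) by assoc.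
      rewrite (HA _ _ Ib).
      replace (h sa ** (a ** alpha (sb ** sb^-1)) ** b) with (h sa ** a ** (alpha (sb ** sb^-1) ** b)) by assoc.
      rewrite (inAe_l _ _ Hb). reflexivity.
    + replace (a ** b ** (alpha (sa ** sa^-1) ** h sb)) with ((a ** (b ** alpha (sa ** sa^-1))) ** h sb) by assoc.
      rewrite <- (HA _ _ Ia), (isg_assoc _ a (alpha (sa ** sa^-1)) b), (inAe_r _ _ Ha). assoc.
    + transitivity (a ** (alpha (sa ** sa^-1) ** h sb) ** b).
      * replace (a ** (alpha (sa ** sa^-1) ** h sb) ** b) with ((a ** alpha (sa ** sa^-1)) ** h sb ** b) by assoc.
        rewrite (inAe_r _ _ Ha). assoc.
      * rewrite <- Hh2, <- Eq, Hh2 by apply idem_l.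
        replace (a ** (alpha (sb ** sb^-1) ** h sa) ** b) with (a ** (alpha (sb ** sb^-1) ** h sa ** b)) by assoc.
        rewrite (HA _ _ Ib).
        replace (a ** (h sa ** alpha (sb ** sb^-1) ** b)) with (a ** h sa ** (alpha (sb ** sb^-1) ** b)) by assoc.
        rewrite (inAe_l _ _ Hb). reflexivity.
Qed.

End Main.

Section Mod.
Context {S A : InvSemigroup} {G : Group} (q : S -> G)
  (alpha : S -> A) (lam : S -> A -> A) (f : S -> S -> A)
  (alpha' : S -> A) (lam' : S -> A -> A) (f' : S -> S -> A) (g : S -> A).
Context (HE : E_unitary S) (HA : semilattice_of_groups A) (Hq : max_group_image S G q)
  (Hmod : sieben_twisted_module alpha lam f)
  (Hmod' : sieben_twisted_module alpha' lam' f')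
  (Hal : forall e, is_idem e -> alpha' e = alpha e)
  (Hg : forall s, in_Ae (alpha (s ** s^-1)) (g s))
  (Hlg : forall s a, lam' s a = g s ** lam s a ** (g s)^-1)
  (Hfg : forall s t, f' s t ** g (s ** t) = g s ** lam s (g t) ** f s t).

Lemma lam_in s a : in_Ae (alpha (s^-1 ** s)) a -> in_Ae (alpha (s ** s^-1)) (lam s a).
Proof.
  destruct Hmod as [Hiso [Hlam [_ [_ [Hii _]]]]].
  intros Ha. destruct (Hlam s) as [Hend _]. unfold is_endo in Hend.
  assert (K : s ** (s^-1 ** s) ** s^-1 = s ** s^-1).
  { replace (s ** (s^-1 ** s) ** s^-1) with (s ** s^-1 ** s ** s^-1) by assoc. now rewrite isg_regular. }
  destruct Ha as [H1 H2]. split.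
  - rewrite <- (endo_inv _ _ Hend), <- Hend, H1, Hii by apply idem_r. now rewrite K.
  - rewrite <- (endo_inv _ _ Hend), <- Hend, H2, Hii by apply idem_r. now rewrite K.
Qed.

Lemma g_idem e : is_idem e -> g e = alpha e.
Proof.
  destruct Hmod as [Hiso [Hlam [_ [Hi [Hii [_ [_ [_ [_ [Hs1 Hs2]]]]]]]]]].
  destruct Hmod' as [_ [_ [_ [_ [_ [_ [_ [_ [_ [Hs1' Hs2']]]]]]]]]].
  intros He. pose proof (Hfg e e) as H.
  assert (IE := alpha_idem alpha Hiso _ He).
  pose proof (Hg e) as Hge. rewrite (idem_inv _ He), He in Hge.
  rewrite (Hs1' e e He), (Hs1 e e He), (Hi e _ He), (idem_inv _ He), !He, (Hal _ He) in H.
  rewrite (inAe_l _ _ Hge) in H.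
  rewrite <- isg_assoc, (inAe_r _ _ Hge) in H.
  assert (Ig : is_idem (g e)) by (unfold is_idem; congruence).
  destruct Hge as [Hge1 _]. rewrite <- Hge1, (idem_inv _ Ig). symmetry. exact Ig.
Qed.

Lemma g_es e s : is_idem e -> g (e ** s) = alpha e ** g s.
Proof.
  destruct Hmod as [Hiso [Hlam [_ [Hi [Hii [_ [_ [_ [_ [Hs1 Hs2]]]]]]]]]].
  destruct Hmod' as [_ [_ [_ [_ [_ [_ [_ [_ [_ [Hs1' Hs2']]]]]]]]]].
  intros He. pose proof (Hfg e s) as H.
  assert (IE := alpha_idem alpha Hiso _ He).
  assert (Ies : is_idem (e ** (s ** s^-1))) by (apply idem_mul; auto using idem_l).
  rewrite (Hs2' s e He), (Hs2 s e He) in H.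
  rewrite <- !isg_assoc, (Hal _ Ies) in H.
  rewrite (g_idem e He), (Hi e _ He) in H.
  rewrite (alpha_mul alpha Hiso _ _ He (idem_l s)) in H.
  pose proof (Hg (e ** s)) as Hges.
  rewrite inv_mul, (idem_inv _ He) in Hges.
  replace (e ** s ** (s^-1 ** e)) with (e ** (s ** s^-1) ** e) in Hges by assoc.
  rewrite (proj1 (idem_absorb _ _ He (idem_l s))) in Hges.
  rewrite (alpha_mul alpha Hiso _ _ He (idem_l s)) in Hges.
  rewrite (inAe_l _ _ Hges) in H. rewrite H.
  replace (alpha e ** (alpha e ** g s ** (alpha e ** alpha (s ** s^-1))))
    with (alpha e ** alpha e ** (g s ** alpha e) ** alpha (s ** s^-1)) by assoc.
  rewrite <- (HA _ (g s) IE).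
  replace (alpha e ** alpha e ** (alpha e ** g s) ** alpha (s ** s^-1))
    with (alpha e ** alpha e ** alpha e ** (g s ** alpha (s ** s^-1))) by assoc.
  rewrite (inAe_r _ _ (Hg s)). unfold is_idem in IE. now rewrite !IE.
Qed.

End Mod.

Lemma idem3 {T : InvSemigroup} (e1 e2 : T) : is_idem e1 -> is_idem e2 ->
  e1 ** e2 ** e1 ** (e1 ** e2) = e1 ** e2.
Proof. intros H1 H2. rewrite (proj1 (idem_absorb _ _ H1 H2)). apply idem_mul; auto. Qed.

Theorem proposition6p13 (S A : InvSemigroup) (G : Group) (q : S -> G)
  (alpha : S -> A) (lam : S -> A -> A) (f : S -> S -> A)
  (alpha' : S -> A) (lam' : S -> A -> A) (f' : S -> S -> A)
  (theta : G -> A -> A) (wL wR : G -> G -> A -> A)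
  (theta' : G -> A -> A) (wL' wR' : G -> G -> A -> A) :
  E_unitary S -> semilattice_of_groups A -> max_group_image S G q ->
  sieben_twisted_module alpha lam f ->
  sieben_twisted_module alpha' lam' f' ->
  equiv_twisted_modules alpha lam f alpha' lam' f' ->
  Theta_of alpha lam f q theta wL wR ->
  Theta_of alpha' lam' f' q theta' wL' wR' ->
  equiv_TPA (Ddom alpha q) (Ddom alpha' q) theta wL wR theta' wL' wR'.
Proof.
  intros HE HA Hq Hmod Hmod' [Hal [g [Hg [Hlg Hfg]]]] [Th1 Th2] [Th1' Th2'].
  assert (Hiso : iso_E alpha) by apply Hmod.
  assert (Hlam : forall s, is_endo (lam s)) by apply Hmod.
  assert (Hfin : forall s t, in_Ae (alpha (s ** t ** t^-1 ** s^-1)) (f s t)) by apply Hmod.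
  assert (Hfin' : forall s t, in_Ae (alpha' (s ** t ** t^-1 ** s^-1)) (f' s t)) by apply Hmod'.
  pose (gi := fun s => (g s)^-1).
  assert (Gg : Goodh alpha g).
  { split. exact Hg. intros e s He. eapply g_es; eauto. }
  assert (Ggi : Goodh alpha gi).
  { split. intros s. apply inAe_inv, Hg. intros e s He. unfold gi.
    rewrite (g_es _ _ _ _ _ _ _ HA Hmod Hmod' Hal Hg Hfg e s He), inv_mul.
    rewrite (idem_inv _ (alpha_idem _ Hiso _ He)). symmetry. apply HA. apply (alpha_idem _ Hiso _ He). }
  split.
  { intros x a. split; intros [s [Hs1 Hs2]]; exists s; split; auto.
    - rewrite <- (Hal _ (idem_l s)). exact Hs2.
    - rewrite (Hal _ (idem_l s)). exact Hs2. }
  exists (mulL q alpha g), (mulR q alpha g), (mulL q alpha gi), (mulR q alpha gi).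
  split; [|split].
  - intros x. split; [apply mult_h; auto|split; [apply mult_h; auto|]].
    intros a [s Hs]. pose proof Hs as [Hs1 Hs2].
    assert (P1 : P q alpha x (gi s ** a) s) by (split; auto; apply inAe_same; auto; apply Ggi).
    assert (P2 : P q alpha x (a ** gi s) s) by (split; auto; apply inAe_same; auto; apply Ggi).
    assert (P3 : P q alpha x (g s ** a) s) by (split; auto; apply inAe_same; auto).
    assert (P4 : P q alpha x (a ** g s) s) by (split; auto; apply inAe_same; auto).
    unfold gi in *. destruct (Hg s) as [Hg1 Hg2].
    split; [|split; [|split]].
    + rewrite (mulL_eq _ _ HE Hq Hiso _ _ _ _ Hs), (mulL_eq _ _ HE Hq Hiso _ _ _ _ P1).
      rewrite isg_assoc, Hg1. apply (inAe_l _ _ Hs2).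
    + rewrite (mulL_eq _ _ HE Hq Hiso _ _ _ _ Hs), (mulL_eq _ _ HE Hq Hiso _ _ _ _ P3).
      rewrite isg_assoc, Hg2. apply (inAe_l _ _ Hs2).
    + rewrite (mulR_eq _ _ HE Hq Hiso _ _ _ _ Hs), (mulR_eq _ _ HE Hq Hiso _ _ _ _ P2).
      rewrite <- isg_assoc, Hg2. apply (inAe_r _ _ Hs2).
    + rewrite (mulR_eq _ _ HE Hq Hiso _ _ _ _ Hs), (mulR_eq _ _ HE Hq Hiso _ _ _ _ P4).
      rewrite <- isg_assoc, Hg1. apply (inAe_r _ _ Hs2).
  - intros x a [u [Hu1 Hu2]].
    assert (Hsx : q (u^-1) = x) by (rewrite (q_inv q Hq), Hu1; apply ginv_inv).
    assert (Hsa : in_Ae (alpha (u^-1^-1 ** u^-1)) a) by (rewrite inv_inv; exact Hu2).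
    assert (Dd : Ddom alpha q (ginv x) a) by (exists u; auto).
    assert (Dd' : Ddom alpha' q (ginv x) a) by (exists u; rewrite (Hal _ (idem_l u)); auto).
    rewrite (Th1 x a _ Dd Hsx (eq_sym (proj1 Hsa))).
    rewrite (Th1' x a _ Dd' Hsx) by (rewrite (Hal _ (idem_r _)); exact (eq_sym (proj1 Hsa))).
    rewrite Hlg.
    assert (Hl := lam_in _ _ _ Hmod _ _ Hsa).
    assert (P1 : P q alpha x (lam (u^-1) a) (u^-1)) by (split; auto).
    rewrite (mulR_eq _ _ HE Hq Hiso _ _ _ _ P1).
    assert (P2 : P q alpha x (lam (u^-1) a ** gi (u^-1)) (u^-1))
      by (split; auto; apply inAe_same; auto; apply Ggi).
    rewrite (mulL_eq _ _ HE Hq Hiso _ _ _ _ P2). unfold gi. assoc.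
  - intros x y a [b [c [[u [Hu1 Hu2]] [[v [Hv1 Hv2]] Ha]]]]. subst a.
    destruct (ex_intro (fun s => s = u^-1 ** (v ** v^-1)) _ eq_refl) as [s Hsd].
    destruct (ex_intro (fun t => t = s ** v) _ eq_refl) as [t Htd].
    destruct (ex_intro (fun w => w = s^-1 ** t) _ eq_refl) as [w Hwd].
    assert (Iu := idem_l u). assert (Iv := idem_l v).
    assert (Hsx : q s = x).
    { rewrite Hsd, (q_mul q Hq), (q_inv q Hq), (q_idem q Hq _ Iv), Hu1, gone_r. apply ginv_inv. }
    assert (Hqt : q t = gmul x y) by (rewrite Htd, (q_mul q Hq), Hsx, Hv1; reflexivity).
    assert (Hsv : s ** (v ** v^-1) = s) by (rewrite Hsd, <- isg_assoc, Iv; reflexivity).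
    assert (Hss : s^-1 ** s = (v ** v^-1) ** (u ** u^-1)).
    { rewrite Hsd, inv_mul, inv_inv, (idem_inv _ Iv).
      replace (v ** v^-1 ** u ** (u^-1 ** (v ** v^-1))) with (v ** v^-1 ** (u ** u^-1) ** (v ** v^-1)) by assoc.
      apply idem_absorb; auto. }
    assert (Iss := idem_r s).
    assert (HsA : in_Ae (alpha (s^-1 ** s)) (b ** c)).
    { rewrite Hss, (alpha_mul _ Hiso _ _ Iv Iu).
      rewrite (idem_comm _ _ (alpha_idem _ Hiso _ Iv) (alpha_idem _ Hiso _ Iu)).
      apply inAe_mul; auto. }
    assert (Htt : t ** t^-1 = s ** s^-1).
    { rewrite Htd, inv_mul. replace (s ** v ** (v^-1 ** s^-1)) with (s ** (v ** v^-1) ** s^-1) by assoc.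
      rewrite Hsv. reflexivity. }
    assert (Hsw : s ** w = t).
    { rewrite Hwd, Htd. replace (s ** (s^-1 ** (s ** v))) with (s ** s^-1 ** s ** v) by assoc.
      rewrite isg_regular. reflexivity. }
    assert (Hww : w ** w^-1 = s^-1 ** s).
    { assert (Hw' : w = s^-1 ** s ** v) by (rewrite Hwd, Htd; assoc).
      rewrite Hw', inv_mul, (idem_inv _ Iss).
      replace (s^-1 ** s ** v ** (v^-1 ** (s^-1 ** s))) with (s^-1 ** s ** (v ** v^-1) ** (s^-1 ** s)) by assoc.
      rewrite Hss. apply idem3; auto. }
    assert (Hqw : q w = y).
    { rewrite Hwd, Htd, (q_mul q Hq), (q_mul q Hq), (q_inv q Hq), Hsx, Hv1, gassoc, ginv_l. apply gone_l. }
    assert (HwP : P q alpha y (b ** c) w) by (split; auto; rewrite Hww; auto).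
    assert (Es := alpha_idem _ Hiso _ (idem_l s)).
    assert (Hfw : in_Ae (alpha (s ** s^-1)) (f s w)).
    { pose proof (Hfin s w) as K.
      replace (s ** w ** w^-1 ** s^-1) with ((s ** w) ** (s ** w)^-1) in K by (rewrite inv_mul; assoc).
      rewrite Hsw, Htt in K. exact K. }
    assert (Hfw' : in_Ae (alpha (s ** s^-1)) (f' s w)).
    { pose proof (Hfin' s w) as K.
      replace (s ** w ** w^-1 ** s^-1) with ((s ** w) ** (s ** w)^-1) in K by (rewrite inv_mul; assoc).
      rewrite Hsw, Htt, (Hal _ (idem_l s)) in K. exact K. }
    rewrite (mulR_eq _ _ HE Hq Hiso _ _ _ _ HwP).
    assert (Ha1 : in_Ae (alpha (s^-1 ** s)) (b ** c ** g w)).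
    { apply inAe_same; auto. rewrite <- Hww. apply Hg. }
    assert (Hsi : q (s^-1) = ginv x) by (rewrite (q_inv q Hq), Hsx; reflexivity).
    assert (Dd1 : Ddom alpha q (ginv x) (b ** c ** g w)) by (exists (s^-1); rewrite inv_inv; auto).
    rewrite (Th1 x _ s Dd1 Hsx (eq_sym (proj1 Ha1))).
    assert (Hb1 := lam_in _ _ _ Hmod _ _ Ha1).
    assert (PD : prod_dom (Ddom alpha q) x (gmul x y) (lam s (b ** c ** g w))).
    { exists (lam s (b ** c ** g w)), (alpha (s ** s^-1)). split; [|split].
      - exists s. auto.
      - exists t. split; auto. rewrite Htt. apply inAe_E. auto.
      - symmetry. apply (inAe_r _ _ Hb1). }
    destruct (Th2 x y _ s t PD Hsx Hqt (eq_sym (proj1 Hb1))) as [_ HwR].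
    { rewrite Htt. exact (eq_sym (proj1 Hb1)). }
    rewrite HwR, <- Hwd.
    assert (P5 : P q alpha x (lam s (b ** c ** g w) ** f s w) s) by (split; auto; apply inAe_same; auto).
    rewrite (mulL_eq _ _ HE Hq Hiso _ _ _ _ P5).
    assert (Dd' : Ddom alpha' q (ginv x) (b ** c))
      by (exists (s^-1); rewrite inv_inv, (Hal _ Iss); auto).
    rewrite (Th1' x _ s Dd' Hsx) by (rewrite (Hal _ Iss); exact (eq_sym (proj1 HsA))).
    rewrite Hlg.
    assert (Hl := lam_in _ _ _ Hmod _ _ HsA).
    assert (Hb2 : in_Ae (alpha (s ** s^-1)) (g s ** lam s (b ** c) ** (g s)^-1)).
    { apply (inAe_same HA). apply (inAe_same HA); auto. apply inAe_inv; auto. }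
    assert (PD' : prod_dom (Ddom alpha' q) x (gmul x y) (g s ** lam s (b ** c) ** (g s)^-1)).
    { exists (g s ** lam s (b ** c) ** (g s)^-1), (alpha (s ** s^-1)). split; [|split].
      - exists s. rewrite (Hal _ (idem_l s)). auto.
      - exists t. split; auto. rewrite Htt, (Hal _ (idem_l s)). apply inAe_E. auto.
      - symmetry. apply (inAe_r _ _ Hb2). }
    destruct (Th2' x y _ s t PD' Hsx Hqt) as [_ HwR'].
    { rewrite (Hal _ (idem_l s)). exact (eq_sym (proj1 Hb2)). }
    { rewrite Htt, (Hal _ (idem_l s)). exact (eq_sym (proj1 Hb2)). }
    rewrite HwR', <- Hwd.
    assert (P6 : P q alpha (gmul x y) (g s ** lam s (b ** c) ** (g s)^-1 ** f' s w) t)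
      by (split; auto; rewrite Htt; apply inAe_same; auto).
    rewrite (mulR_eq _ _ HE Hq Hiso _ _ _ _ P6).
    rewrite <- Hsw.
    replace (g s ** lam s (b ** c) ** (g s)^-1 ** f' s w ** g (s ** w))
      with (g s ** lam s (b ** c) ** (g s)^-1 ** (f' s w ** g (s ** w))) by assoc.
    rewrite Hfg.
    replace (g s ** lam s (b ** c) ** (g s)^-1 ** (g s ** lam s (g w) ** f s w))
      with (g s ** (lam s (b ** c) ** ((g s)^-1 ** g s)) ** lam s (g w) ** f s w) by assoc.
    rewrite (proj2 (Hg s)), (inAe_r _ _ Hl), (Hlam s (b ** c) (g w)). assoc.
Qed.
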